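(* Let $G$ be a finite abelian group with a unitary representation $U$ on a finite-dimensional Hilbert space, and let $|\psi\rangle$ be any pure state. Then there is a pure state $|\psi'\rangle$ (of a system carrying a unitary representation $U'$ of $G$) such that $\psi$ and $\psi'$ can be reversibly transformed into each other by covariant CPTP maps, and $U'(a)|\psi'\rangle=|\psi'\rangle$ for all $a\in\mathrm{Sym}_G(\psi')$.
   Context: $\mathrm{Sym}_G(\psi)=\{g\in G: U(g)|\psi\rangle\langle\psi|U(g)^\dagger=|\psi\rangle\langle\psi|\}$, i.e. the set of $g$ with $U(g)|\psi\rangle=e^{i\theta_g}|\psi\rangle$ for some phase. A CPTP map $\Lambda$ between systems carrying representations $U$ and $U'$ is covariant if $U'(g)\Lambda(X)U'(g)^\dagger=\Lambda(U(g)XU(g)^\dagger)$ for all $g\in G$. *)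

(* Defs.v *)
From HB Require Import structures.
From mathcomp Require Import all_boot all_order all_algebra all_fingroup.
From mathcomp Require Import Rstruct complex.
From Stdlib Require Rdefinitions.
From mathcomp Require Import mxrepresentation.
Set Implicit Arguments. Unset Strict Implicit. Unset Printing Implicit Defensive.
Import Order.TTheory GRing.Theory Num.Theory.
Local Open Scope ring_scope.

Notation CC := (Rdefinitions.R)[i].

Definition adj {m n : nat} (A : 'M[CC]_(m, n)) : 'M[CC]_(n, m) :=
  \matrix_(i, j) (A j i)^*.

Definition unitary_mx {n : nat} (V : 'M[CC]_n) : Prop :=
  V *m adj V = 1%:M /\ adj V *m V = 1%:M.

Definition unitary_rep {gT : finGroupType} (G : {group gT}) (n : nat)
  (U : gT -> 'M[CC]_n) : Prop :=
  mx_repr G U /\ forall g, g \in G -> unitary_mx (U g).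

Definition pure_state {n : nat} (psi : 'cV[CC]_n) : Prop :=
  adj psi *m psi = 1%:M.

Definition proj {n : nat} (psi : 'cV[CC]_n) : 'M[CC]_n := psi *m adj psi.

Definition SymG {gT : finGroupType} (G : {group gT}) {n : nat}
  (U : gT -> 'M[CC]_n) (psi : 'cV[CC]_n) : {set gT} :=
  [set g in G | U g *m proj psi *m adj (U g) == proj psi].

(* positive semidefinite "matrix" indexed by an arbitrary finite type:
   <x, A x> >= 0 for all vectors x (over C this forces A Hermitian) *)
Definition psd {I : finType} (A : I -> I -> CC) : Prop :=
  forall x : I -> CC, 0 <= \sum_(i : I) \sum_(j : I) (x i)^* * A i j * x j.

Definition psd_mx {n : nat} (A : 'M[CC]_n) : Prop := psd (fun i j => A i j).

(* id_k (x) L acting on operators on C^k (x) C^n, indexed by pairs (a, i) *)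
Definition ampl (k : nat) {n m : nat} (L : 'M[CC]_n -> 'M[CC]_m)
  (X : ('I_k * 'I_n)%type -> ('I_k * 'I_n)%type -> CC) :
  ('I_k * 'I_m)%type -> ('I_k * 'I_m)%type -> CC :=
  fun p q => L (\matrix_(i, j) X (p.1, i) (q.1, j)) p.2 q.2.

Definition completely_positive {n m : nat} (L : 'M[CC]_n -> 'M[CC]_m) : Prop :=
  forall (k : nat) (X : ('I_k * 'I_n)%type -> ('I_k * 'I_n)%type -> CC),
    psd X -> psd (@ampl k n m L X).

Definition trace_preserving {n m : nat} (L : 'M[CC]_n -> 'M[CC]_m) : Prop :=
  forall X, \tr (L X) = \tr X.

Definition CPTP {n m : nat} (L : 'M[CC]_n -> 'M[CC]_m) : Prop :=
  linear L /\ completely_positive L /\ trace_preserving L.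

Definition covariant {gT : finGroupType} (G : {group gT}) {n m : nat}
  (U : gT -> 'M[CC]_n) (U' : gT -> 'M[CC]_m) (L : 'M[CC]_n -> 'M[CC]_m) : Prop :=
  forall g, g \in G -> forall X,
    U' g *m L X *m adj (U' g) = L (U g *m X *m adj (U g)).

(* Main.v *)
Require Import Defs.
From HB Require Import structures.
From mathcomp Require Import all_boot all_order all_algebra all_fingroup.
From mathcomp Require Import Rstruct complex mxrepresentation.
From Stdlib Require Import Classical_Prop.
Import Order.TTheory GRing.Theory Num.Theory.
Local Open Scope ring_scope.

Lemma adjZ m n (c : CC) (A : 'M[CC]_(m, n)) : adj (c *: A) = c^* *: adj A.
Proof. by apply/matrixP=> i j; rewrite !mxE rmorphM. Qed.

Lemma scal_inj n (w : 'cV[CC]_n) (a b : CC) : w != 0 -> a *: w = b *: w -> a = b.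
Proof.
move=> nz E; apply/eqP; rewrite -subr_eq0.
have : (a - b) *: w == 0 by rewrite scalerBl E subrr.
by rewrite scaler_eq0 (negbTE nz) orbF.
Qed.

Arguments scal_inj {n w a b}.

Lemma common_eigen (gT : finGroupType) (G : {group gT}) n (U : gT -> 'M[CC]_n)
  (S : {set gT}) (th : gT -> CC) (w0 : 'cV[CC]_n) :
  abelian G -> mx_repr G U -> S \subset G -> w0 != 0 ->
  (forall a, a \in S -> U a *m w0 = th a *: w0) ->
  exists2 w : 'cV[CC]_n, w != 0 & exists chi : gT -> CC,
    (forall g, g \in G -> U g *m w = chi g *: w) /\
    (forall a, a \in S -> U a *m w = th a *: w).
Proof.
move=> cGG hU sSG nzw0 hS.
have rT : mx_repr G (fun g => (U g)^T).
  split; first by rewrite /= hU.1 trmx1.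
  move=> x y Gx Gy /=; rewrite -trmx_mul -hU.2 //.
  by rewrite ((centsP cGG) x Gx y Gy) hU.2.
pose rG := MxRepresentation rT.
pose E := (\bigcap_(a | a \in S) kermx ((U a)^T - (th a)%:M))%MS.
have w0E : (w0^T <= E)%MS.
  apply/sub_bigcapmxP => a Sa; apply/sub_kermxP.
  by rewrite mulmxBr -trmx_mul hS // mul_mx_scalar linearZ /= subrr.
have modE : mxmodule rG E.
  apply/mxmoduleP => g Gg /=; apply/sub_bigcapmxP => a Sa; apply/sub_kermxP.
  have comm : (U g)^T *m ((U a)^T - (th a)%:M) = ((U a)^T - (th a)%:M) *m (U g)^T.
    have Ga := subsetP sSG a Sa.
    rewrite mulmxBl mulmxBr scalar_mxC -!trmx_mul -!hU.2 //.
    by rewrite ((centsP cGG) a Ga g Gg).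
  rewrite -mulmxA comm mulmxA.
  have /sub_bigcapmxP/(_ a Sa)/sub_kermxP -> := submx_refl E.
  by rewrite mul0mx.
have nzE : E != 0.
  apply: contraNneq nzw0 => E0; move: w0E; rewrite E0 submx0 => /eqP.
  by move/(congr1 trmx); rewrite trmxK trmx0 => ->.
have := mxsimple_exists modE nzE; move/classicP => nn.
apply: NNPP => ngoal; apply: nn => [[V simV sVE]]; apply: ngoal.
have rV1 : \rank V = 1%N.
  exact: (mxsimple_abelian_linear (@group_closure_closed_field _ gT G) cGG simV).
have [modV nzV _] := simV.
pose v := nz_row V.
have nzv : v != 0 by rewrite nz_row_eq0.
have vV : (v <= V)%MS := nz_row_sub V.
have Vv : (V <= v)%MS by rewrite -(mxrank_leqif_sup vV).2 rank_rV nzv rV1.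
have ex : forall g, exists c, (g \in G) ==> (v *m (U g)^T == c *: v).
  move=> g; case Gg : (g \in G); last by exists 0.
  have : (v *m (U g)^T <= v)%MS.
    apply: submx_trans Vv; apply: submx_trans ((mxmoduleP modV) g Gg).
    by rewrite submxMr.
  by case/sub_rVP => c ->; exists c; rewrite eqxx.
pose chi g := xchoose (ex g).
exists v^T.
  by apply: contraNneq nzv => h; rewrite -[v]trmxK h trmx0.
exists chi; split.
  move=> g Gg; have /implyP/(_ Gg)/eqP := xchooseP (ex g); move/(congr1 trmx).
  by rewrite trmx_mul trmxK linearZ.
move=> a Sa.
have : (v <= kermx ((U a)^T - (th a)%:M))%MS.
  have EK : (E <= kermx ((U a)^T - (th a)%:M))%MS.
    by have /sub_bigcapmxP/(_ a Sa) := submx_refl E.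
  exact: submx_trans vV (submx_trans sVE EK).
move/sub_kermxP; rewrite mulmxBr mul_mx_scalar => /eqP; rewrite subr_eq0 => /eqP.
by move/(congr1 trmx); rewrite trmx_mul trmxK linearZ.
Qed.

Lemma id_CPTP n : CPTP (fun X : 'M[CC]_n => X).
Proof.
split; first by move=> a u v.
split; last by [].
move=> k X hX x; have := hX x.
suff -> : (\sum_i \sum_j (x i)^* * @ampl k n n (fun X0 => X0) X i j * x j)
  = \sum_i \sum_j (x i)^* * X i j * x j by [].
apply: eq_bigr => [[p1 p2]] _; apply: eq_bigr => [[q1 q2]] _.
by rewrite /ampl /= mxE.
Qed.

Theorem mainTheorem6 (gT : finGroupType) (G : {group gT}) (n : nat)
  (U : gT -> 'M[CC]_n) (psi : 'cV[CC]_n) :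
  abelian G -> unitary_rep G U -> pure_state psi ->
  exists (m : nat) (U' : gT -> 'M[CC]_m) (psi' : 'cV[CC]_m)
         (L1 : 'M[CC]_n -> 'M[CC]_m) (L2 : 'M[CC]_m -> 'M[CC]_n),
    [/\ unitary_rep G U', pure_state psi',
        CPTP L1 /\ covariant G U U' L1 /\ L1 (proj psi) = proj psi',
        CPTP L2 /\ covariant G U' U L2 /\ L2 (proj psi') = proj psi &
        forall a, a \in SymG G U' psi' -> U' a *m psi' = psi'].
Proof.
move=> cGG [hU hUu] hpsi.
pose S := SymG G U psi.
pose th a := (adj psi *m U a *m psi) 0 0.
have hth : forall a, a \in S -> U a *m psi = th a *: psi.
  move=> a; rewrite inE => /andP[Ga /eqP E].
  have L : U a *m proj psi *m adj (U a) *m (U a *m psi) = U a *m psi.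
    rewrite /proj !mulmxA -(mulmxA _ (adj (U a))) (hUu a Ga).2 mulmx1.
    by rewrite -(mulmxA _ (adj psi)) hpsi mulmx1.
  have R : proj psi *m (U a *m psi) = th a *: psi.
    by rewrite /proj -mulmxA (mx11_scalar (adj psi *m (U a *m psi))) mul_mx_scalar /th mulmxA.
  by rewrite -L E R.
have nzpsi : psi != 0.
  apply/eqP => p0; move: hpsi; rewrite /pure_state p0 mulmx0 => /matrixP/(_ 0 0).
  by rewrite !mxE /= => /eqP; rewrite eq_sym oner_eq0.
have sSG : S \subset G by apply/subsetP => a; rewrite inE => /andP[].
have [w nzw [chi [hchi hS]]] := @common_eigen gT G n U S th psi cGG hU sSG nzpsi hth.
have chiM : forall x y, x \in G -> y \in G -> chi (x * y)%g = chi x * chi y.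
  move=> x y Gx Gy; apply: (scal_inj nzw).
  by rewrite -hchi ?groupM // hU.2 // -mulmxA hchi // -scalemxAr hchi // scalerA mulrC.
have chi1 : chi 1%g = 1.
  by apply: (scal_inj nzw); rewrite -hchi // hU.1 mul1mx scale1r.
have chiX : forall g k, g \in G -> chi (g ^+ k)%g = chi g ^+ k.
  move=> g k Gg; elim: k => [|k IH]; first by rewrite expg0 chi1 expr0.
  by rewrite expgS chiM ?groupX // IH exprS.
have chiC : forall g, g \in G -> (chi g)^* * chi g = 1.
  move=> g Gg; rewrite -normCKC.
  have : `|chi g| ^+ #[g]%g == 1 by rewrite -normrX -chiX // expg_order chi1 normr1.
  by rewrite pexpr_eq1 ?order_gt0 // => /eqP ->; rewrite expr1n.
have chiS : forall a, a \in S -> chi a = th a.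
  move=> a Sa; apply: (scal_inj nzw); rewrite -hchi ?hS //; exact: (subsetP sSG).
pose U' g := (chi g)^* *: U g.
have phase : forall g X, g \in G -> U' g *m X *m adj (U' g) = U g *m X *m adj (U g).
  move=> g X Gg; rewrite /U' adjZ -!scalemxAl -scalemxAr scalerA conjCK chiC // scale1r.
  by [].
exists n, U', psi, (fun X => X), (fun X => X); split => //.
- split.
    split; first by rewrite /U' chi1 rmorph1 scale1r hU.1.
    move=> x y Gx Gy; rewrite /U' chiM // rmorphM hU.2 //.
    by rewrite -scalemxAl -scalemxAr scalerA mulrC.
  move=> g Gg; split.
    by have := phase g 1%:M Gg; rewrite !mulmx1 => ->; exact: (hUu g Gg).1.
  rewrite /U' adjZ -scalemxAl -scalemxAr scalerA conjCK mulrC chiC // scale1r.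
  exact: (hUu g Gg).2.
- by split; [exact: id_CPTP | split => // g Gg X; rewrite phase].
- by split; [exact: id_CPTP | split => // g Gg X; rewrite phase].
move=> a; rewrite inE => /andP[Ga /eqP E].
have Sa : a \in S by rewrite inE Ga -(phase a) // E eqxx.
by rewrite /U' -scalemxAl hth // scalerA -chiS // chiC // scale1r.
Qed.
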